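(* Let $n\ge1$, $p$ a prime, and $r$ a composition of $n$. The basis element $\overline{B}_r$ of the $p$-modular descent algebra $\Sigma(n,p)$ is nilpotent if and only if some positive integer occurs at least $p$ times as a component of $r$.
   Context: A composition of $n$ is a sequence of positive integers with sum $n$. The descent algebra $\Sigma_n$ has basis $\{B_q\}$ indexed by compositions of $n$ with multiplication $B_qB_r=\sum_{Z\in S(q,r)}B_{c(Z)}$, where for $q=[a_1,\dots,a_s]$, $r=[b_1,\dots,b_t]$, $S(q,r)$ is the set of $s\times t$ non-negative integer matrices with row sums $a_i$ and column sums $b_j$, and $c(Z)$ is the composition obtained by reading the entries of $Z$ row by row and omitting zeros. Let $\mathcal{Z}_n$ be the subring of integral combinations of the $B_q$ and $\Sigma(n,p)=\mathcal{Z}_n/p\mathcal{Z}_n$, an $\mathbb{F}_p$-algebra with basis $\overline{B}_q$ (images of the $B_q$); equivalently, $\overline{B}_q\overline{B}_r$ is given by the same formula with coefficients reduced mod $p$. *)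

(* Defs.v *)
From mathcomp Require Import all_boot all_order all_algebra.
Set Implicit Arguments. Unset Strict Implicit. Unset Printing Implicit Defensive.
Import GRing.Theory.
Local Open Scope ring_scope.

Definition is_composition (n : nat) (r : seq nat) : bool :=
  all (fun x => 0 < x)%N r && (sumn r == n).

Fixpoint allseqs (T : Type) (m : nat) (L : seq T) : seq (seq T) :=
  match m with
  | 0 => [:: [::]]
  | m'.+1 => [seq x :: w | x <- L, w <- allseqs m' L]
  end.

Definition mcol (Z : seq (seq nat)) (j : nat) : seq nat :=
  [seq nth 0%N row j | row <- Z].

(* S(q,r): the (size q) x (size r) nonnegative integer matrices with row sums
   q_i and column sums r_j (entries are bounded by sumn q, so this finite
   enumeration is exhaustive; each matrix occurs exactly once). *)
Definition Smat (q r : seq nat) : seq (seq (seq nat)) :=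
  [seq Z <- allseqs (size q) (allseqs (size r) (iota 0 (sumn q).+1))
     | (map sumn Z == q) && ([seq sumn (mcol Z j) | j <- iota 0 (size r)] == r)].

Definition compZ (Z : seq (seq nat)) : seq nat :=
  [seq x <- flatten Z | x != 0%N].

(* Elements of the descent algebra with coefficients in R, as formal
   R-linear combinations of basis elements B_q (list of (q, coefficient)). *)
Definition fsum (R : Type) := seq (seq nat * R).

Definition coef (R : nmodType) (x : fsum R) (c : seq nat) : R :=
  \sum_(t <- x | t.1 == c) t.2.

Definition basisB (R : semiRingType) (q : seq nat) : fsum R := [:: (q, 1)].

Definition mulB (R : semiRingType) (q r : seq nat) : fsum R :=
  [seq (compZ Z, 1) | Z <- Smat q r].

Definition fmul (R : semiRingType) (x y : fsum R) : fsum R :=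
  flatten [seq [seq (w.1, a.2 * b.2 * w.2) | w <- mulB R a.1 b.1]
          | a <- x, b <- y].

(* fpowS x k = x^(k+1) *)
Definition fpowS (R : semiRingType) (x : fsum R) (k : nat) : fsum R :=
  iter k (fun y => fmul y x) x.

Definition fnilpotent (R : semiRingType) (x : fsum R) : Prop :=
  exists k : nat, forall c : seq nat, coef (fpowS x k) c = 0.

(* Main.v *)
Require Import Defs.
From mathcomp Require Import all_boot all_order all_algebra all_fingroup all_solvable.
Set Implicit Arguments. Unset Strict Implicit. Unset Printing Implicit Defensive.

Lemma mem_allseqs (T : eqType) m (L : seq T) w :
  (w \in allseqs m L) = (size w == m) && all (mem L) w.
Proof.
elim: m w => [|m IH] w /=; first by case: w.
apply/allpairsP/idP => [[[y v] /= [Hy Hv ->]]|].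
  by move: Hv; rewrite IH /= eqSS Hy => /andP[-> ->].
case: w => [|x w] //=; rewrite eqSS => /andP[Hs /andP[Hx Hw]].
by exists (x, w); split => //; rewrite IH Hs.
Qed.

Lemma uniq_allseqs (T : eqType) m (L : seq T) : uniq L -> uniq (allseqs m L).
Proof.
move=> UL; elim: m => [|m IH] //=.
by apply: allpairs_uniq => // [[x w] [y v]] _ _ /= [-> ->].
Qed.

Lemma uniq_Smat q r : uniq (Smat q r).
Proof. by apply/filter_uniq/uniq_allseqs/uniq_allseqs/iota_uniq. Qed.

Lemma mem_SmatP q r Z : reflect
  [/\ size Z = size q, all (fun row => (size row == size r) && all (fun x => x <= sumn q) row) Z,
      map sumn Z = q & [seq sumn (mcol Z j) | j <- iota 0 (size r)] = r]
  (Z \in Smat q r).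
Proof.
rewrite mem_filter mem_allseqs.
have -> : all (mem (allseqs (size r) (iota 0 (sumn q).+1))) Z =
          all (fun row => (size row == size r) && all (fun x => x <= sumn q) row) Z.
  apply: eq_all => row /=; rewrite mem_allseqs; congr (_ && _).
  by apply: eq_all => x; change (x \in iota 0 (sumn q).+1 = (x <= sumn q)); rewrite mem_iota add0n ltnS.
apply: (iffP idP).
  by case/andP=> /andP[/eqP-> /eqP->] /andP[/eqP-> ->].
by case=> -> -> -> ->; rewrite !eqxx.
Qed.
Definition nz (x : nat) := x != 0.

Lemma sumn_filter0 (row : seq nat) : sumn [seq x <- row | x != 0] = sumn row.
Proof. by elim: row => //= x row IH; case: eqP => [->|_] //=; rewrite IH. Qed.

Lemma filter0_nil (row : seq nat) : [seq x <- row | x != 0] = [::] ->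
  (forall k, nth 0 row k = 0) /\ sumn row = 0.
Proof.
elim: row => [|x row IH] /=; first by split => // [[]].
case: eqP => // -> /IH [H1 H2]; split => [[|k]|] //=.
Qed.

Lemma filter_pos (row : seq nat) : 0 < sumn row -> 0 < size [seq x <- row | x != 0].
Proof.
rewrite -sumn_filter0; case: [seq x <- row | x != 0] => //.
Qed.

Lemma single_nz (row : seq nat) : size [seq x <- row | x != 0] = 1 ->
  find (fun x => x != 0) row < size row /\
  forall t, nth 0 row t = if t == find (fun x => x != 0) row then sumn row else 0.
Proof.
elim: row => [|x row IH] //=; case: eqP => [->|Hx] /=.
  move=> /IH [H1 H2]; split => // [[|t]] //=; by rewrite H2.
case E: [seq x <- row | x != 0] => [|y s] //= _.
have [H1 H2] := filter0_nil E; split => // [[|t]] //=; by rewrite H2 ?addn0.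
Qed.

Lemma compZ_flat Z : compZ Z = flatten [seq [seq x <- row | x != 0] | row <- Z].
Proof. by rewrite /compZ filter_flatten. Qed.

Lemma compZ_sum Z : sumn (compZ Z) = sumn (map sumn Z).
Proof.
rewrite compZ_flat sumn_flatten -map_comp; congr sumn; apply: eq_map => row /=.
exact: sumn_filter0.
Qed.

Lemma compZ_pos Z : all (fun x => 0 < x) (compZ Z).
Proof. by apply/allP => x; rewrite mem_filter lt0n => /andP[]. Qed.

Lemma compZ_size Z : all (fun row => 0 < sumn row) Z ->
  size Z <= size (compZ Z) /\
  (size (compZ Z) = size Z ->
     compZ Z = map sumn Z /\ all (fun row => size [seq x <- row | x != 0] == 1) Z).
Proof.
rewrite compZ_flat; elim: Z => [|row Z IH] //= /andP[Hr HZ].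
have [H1 H2] := IH HZ; have Hp := filter_pos Hr.
rewrite size_cat; split; first by rewrite -add1n leq_add.
move=> Hs.
have E1 : size [seq x <- row | x != 0] = 1.
  apply/eqP; rewrite eqn_leq Hp andbT; move: Hs; rewrite -add1n => Hs.
  by rewrite -(leq_add2r (size Z)) -Hs leq_add2l.
have E2 : size (flatten [seq [seq x <- row0 | x != 0] | row0 <- Z]) = size Z.
  by move: Hs; rewrite E1 add1n => -[].
have [-> ->] := H2 E2; rewrite E1 eqxx; split => //.
move: E1 (sumn_filter0 row); case: [seq x <- row | x != 0] => [|y [|]] //= _.
by rewrite addn0 => ->.
Qed.
Import GRing.Theory.

Definition Mc (q r c : seq nat) : nat := count (fun Z => compZ Z == c) (Smat q r).

Section Coef.
Variable R : semiRingType.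
Local Open Scope ring_scope.

Lemma coef_cat (x y : fsum R) c : coef (x ++ y) c = coef x c + coef y c.
Proof. by rewrite /coef big_cat. Qed.

Lemma coef_nil c : coef ([::] : fsum R) c = 0.
Proof. by rewrite /coef big_nil. Qed.

Lemma coef_cons (a : seq nat * R) x c :
  coef (a :: x) c = (if a.1 == c then a.2 else 0) + coef x c.
Proof. by rewrite /coef big_cons; case: ifP; rewrite ?add0r. Qed.

Lemma coef_flatten (xs : seq (fsum R)) c : coef (flatten xs) c = \sum_(x <- xs) coef x c.
Proof. by rewrite /coef big_flatten. Qed.

Lemma coef_mulB_scale (k : R) q r c :
  coef [seq (w.1, k * w.2) | w <- mulB R q r] c = k * (Mc q r c)%:R.
Proof.
rewrite /coef /mulB /Mc -map_comp big_map.
elim: (Smat q r) => [|Z s IH]; first by rewrite big_nil mulr0.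
rewrite big_cons /= IH; case: ifP => _; last by rewrite add0n.
by rewrite add1n mulrS mulrDr mulr1.
Qed.

Lemma coef_fmul (x y : fsum R) c :
  coef (fmul x y) c = \sum_(a <- x) \sum_(b <- y) a.2 * b.2 * (Mc a.1 b.1 c)%:R.
Proof.
rewrite /fmul coef_flatten; elim: x => [|a x IH]; first by rewrite !big_nil.
rewrite /= big_cat big_cons IH; congr (_ + _); rewrite big_map.
by apply: eq_bigr => b _; rewrite -coef_mulB_scale.
Qed.

Lemma coef_regroup (x : fsum R) (g : seq nat -> R) (s : seq (seq nat)) :
  uniq s -> {subset map fst x <= s} ->
  \sum_(a <- x) a.2 * g a.1 = \sum_(q <- s) coef x q * g q.
Proof.
move=> Us; elim: x => [|a x IH] Hs.
  by rewrite big_nil big1 // => q _; rewrite coef_nil mul0r.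
rewrite big_cons IH; last by move=> q Hq; apply: Hs; rewrite /= inE Hq orbT.
have Ha : a.1 \in s by apply: Hs; rewrite /= inE eqxx.
under [RHS]eq_bigr => q _ do rewrite coef_cons mulrDl.
rewrite big_split /=; congr (_ + _).
rewrite (bigD1_seq a.1) //= eqxx big1 ?addr0 // => q /negbTE.
by rewrite eq_sym => ->; rewrite mul0r.
Qed.

End Coef.

Lemma nth_le_sumn (s : seq nat) i : nth 0 s i <= sumn s.
Proof. elim: s i => [|x s IH] [|i] //=; [exact: leq_addr | exact: leq_trans (IH i) (leq_addl _ _)]. Qed.

Lemma sumn_map_enum n (F : 'I_n -> nat) : sumn [seq F i | i <- enum 'I_n] = \sum_(i < n) F i.
Proof. by rewrite sumnE big_map big_enum. Qed.

Lemma sumn_ind (v a : nat) (s : seq nat) :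
  sumn [seq (if v == t then a else 0) | t <- s] = a * count (pred1 v) s.
Proof.
elim: s => [|t s IH] /=; first by rewrite muln0.
by rewrite IH mulnDr eq_sym; case: eqP; rewrite ?muln1 ?muln0.
Qed.

Lemma filter_ind (v a : nat) (s : seq nat) : a != 0 ->
  [seq x <- [seq (if v == t then a else 0) | t <- s] | x != 0] = nseq (count (pred1 v) s) a.
Proof.
move=> Ha; elim: s => [|t s IH] //=.
by case: (eqVneq v t) => [E|H]; rewrite /= ?Ha IH.
Qed.

Lemma count_iota1 v l : v < l -> count (pred1 v) (iota 0 l) = 1.
Proof. by move=> H; rewrite count_uniq_mem ?iota_uniq // mem_iota /= add0n H. Qed.

Definition X (q r : seq nat) : {set {ffun 'I_(size q) -> 'I_(size r)}} :=
  [set f : {ffun 'I_(size q) -> 'I_(size r)} | [forall t, \sum_(i | f i == t) nth 0 q i == nth 0 r t]].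

Definition Zof (q r : seq nat) (f : {ffun 'I_(size q) -> 'I_(size r)}) : seq (seq nat) :=
  [seq [seq (if val (f i) == t then nth 0 q i else 0) | t <- iota 0 (size r)] | i <- enum 'I_(size q)].

Section ZofS.
Variables q r : seq nat.
Implicit Type f : {ffun 'I_(size q) -> 'I_(size r)}.

Lemma size_Zof f : size (Zof f) = size q.
Proof. by rewrite size_map size_enum_ord. Qed.

Lemma nth_Zof f (i : 'I_(size q)) :
  nth [::] (Zof f) i = [seq (if val (f i) == t then nth 0 q i else 0) | t <- iota 0 (size r)].
Proof. by rewrite (nth_map i) ?size_enum_ord ?ltn_ord // nth_ord_enum. Qed.

Lemma nth_nth_Zof f (i : 'I_(size q)) t : t < size r ->
  nth 0 (nth [::] (Zof f) i) t = if val (f i) == t then nth 0 q i else 0.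
Proof. by move=> Ht; rewrite nth_Zof (nth_map 0) ?size_iota // nth_iota. Qed.

Lemma col_Zof f (t : 'I_(size r)) :
  sumn (mcol (Zof f) t) = \sum_(i | f i == t) nth 0 q i.
Proof.
rewrite /mcol /Zof -map_comp.
rewrite (eq_map (g := fun i : 'I_(size q) => if f i == t then nth 0 q i else 0)).
  by rewrite sumn_map_enum [RHS]big_mkcond.
move=> i /=; rewrite (nth_map 0) ?size_iota // nth_iota //= add0n.
Qed.

Lemma Zof_in_Smat f : f \in X q r -> Zof f \in Smat q r.
Proof.
rewrite inE => /forallP HX; apply/mem_SmatP; split.
- exact: size_Zof.
- apply/allP => row /mapP [i _ ->]; rewrite size_map size_iota eqxx /=.
  apply/allP => x /mapP [t _ ->]; case: ifP => // _; exact: nth_le_sumn.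
- apply: (@eq_from_nth _ 0); rewrite size_map ?size_Zof // => i Hi.
  rewrite (nth_map [::]) ?size_Zof // -[i]/(val (Ordinal Hi)) nth_Zof sumn_ind.
  by rewrite (count_iota1 (ltn_ord _)) muln1.
- apply: (@eq_from_nth _ 0); rewrite size_map ?size_iota // => t Ht.
  rewrite (nth_map 0) ?size_iota // nth_iota // add0n.
  by rewrite -[t]/(val (Ordinal Ht)) col_Zof; apply/eqP/HX.
Qed.

Lemma compZ_Zof f : all (fun x => 0 < x) q -> compZ (Zof f) = q.
Proof.
move=> /allP Hq; rewrite compZ_flat /Zof -map_comp.
rewrite (eq_map (g := fun i : 'I_(size q) => [:: nth 0 q i])).
  rewrite flatten_map1 -[RHS](mkseq_nth 0 q) /mkseq -val_enum_ord -map_comp.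
  by apply: eq_map => i.
move=> i /=; rewrite filter_ind ?count_iota1 //.
by rewrite -lt0n; apply: Hq; rewrite mem_nth.
Qed.

Lemma Zof_inj f g : all (fun x => 0 < x) q -> Zof f = Zof g -> f = g.
Proof.
move=> /allP Hq E; apply/ffunP => i; apply: val_inj.
have := nth_nth_Zof g i (ltn_ord (f i)); rewrite -E nth_nth_Zof // eqxx.
case: eqP => [->|_] // H; have := Hq (nth 0 q i) (mem_nth 0 (ltn_ord i)); by rewrite H.
Qed.

Lemma Smat_Zof Z : all (fun x => 0 < x) q -> Z \in Smat q r -> compZ Z = q ->
  exists2 f, f \in X q r & Z = Zof f.
Proof.
move=> Hq /mem_SmatP [HsZ Hrows HsumZ Hcol] HcZ.
have Hpos : all (fun row => 0 < sumn row) Z by rewrite -all_map HsumZ.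
have [_ H2] := compZ_size Hpos.
have Hsz0 : size (compZ Z) = size Z by rewrite HcZ HsZ.
have [_ /allP H1] := H2 Hsz0.
have Hrow : forall i : 'I_(size q),
    find (fun x => x != 0) (nth [::] Z i) < size r /\
    forall t, nth 0 (nth [::] Z i) t =
       if t == find (fun x => x != 0) (nth [::] Z i) then nth 0 q i else 0.
  move=> i; have Hi : nth [::] Z i \in Z by rewrite mem_nth // HsZ.
  have [A B] := single_nz (eqP (H1 _ Hi)).
  have /andP[/eqP Hsz _] := allP Hrows _ Hi.
  split; first by rewrite -Hsz.
  move=> t; rewrite B; congr (if _ then _ else _); have := f_equal (fun s => nth 0 s i) HsumZ; by rewrite /= (nth_map [::]) // HsZ.
pose f := [ffun i => Ordinal (proj1 (Hrow i))].
have EZ : Z = Zof f.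
  apply: (@eq_from_nth _ [::]); rewrite ?size_Zof // => i Hi0.
  have Hi : i < size q by rewrite -HsZ.
  rewrite -[i]/(val (Ordinal Hi)) nth_Zof; set i' := Ordinal Hi.
  have Hi' : nth [::] Z i' \in Z by rewrite mem_nth // HsZ.
  have /andP[/eqP Hsz _] := allP Hrows _ Hi'.
  apply: (@eq_from_nth _ 0); rewrite ?size_map ?size_iota // => t Ht.
  have Ht2 : t < size r by rewrite -Hsz.
  rewrite (nth_map 0) ?size_iota // nth_iota // add0n (proj2 (Hrow i')) ffunE /=.
  by rewrite eq_sym.
exists f => //; rewrite inE; apply/forallP => t; rewrite -col_Zof -EZ.
have := f_equal (fun s => nth 0 s t) Hcol => /=.
by rewrite (nth_map 0) ?size_iota // nth_iota //= add0n => ->.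
Qed.

Lemma Mc_card : all (fun x => 0 < x) q -> Mc q r q = #|X q r|.
Proof.
move=> Hq; rewrite /Mc -size_filter cardE -(size_map (@Zof q r)).
apply/perm_size/uniq_perm.
- exact/filter_uniq/uniq_Smat.
- rewrite map_inj_in_uniq ?enum_uniq // => f g _ _; exact: Zof_inj.
move=> Z; rewrite mem_filter; apply/andP/mapP => [[/eqP Hc HZ]|[f Hf ->]].
  by have [f Hf ->] := Smat_Zof Hq HZ Hc; exists f; rewrite ?mem_enum.
by rewrite compZ_Zof // Zof_in_Smat // -mem_enum.
Qed.

End ZofS.

Lemma card_nth (r : seq nat) v : #|[set u : 'I_(size r) | nth 0 r u == v]| = count_mem v r.
Proof.
rewrite cardE /enum_mem size_filter.
have -> : count_mem v r = count_mem v (mkseq (nth 0 r) (size r)) by rewrite mkseq_nth.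
rewrite /mkseq -val_enum_ord -map_comp count_map.
rewrite enumT; apply: eq_count => u /=; by rewrite inE.
Qed.

Lemma surj_inj (T : finType) (f : T -> T) : (forall y, exists x, f x = y) -> injective f.
Proof.
move=> Hs; apply/injectiveP; apply/card_uniqP; rewrite size_map -cardT.
apply: eq_card => y; rewrite [RHS]inE; have [x <-] := Hs y; apply/mapP; exists x => //.
by rewrite mem_enum.
Qed.

Definition pact j l (f : {ffun 'I_j -> 'I_l}) (s : {perm 'I_l}) : {ffun 'I_j -> 'I_l} :=
  [ffun i => s (f i)].

Lemma pact1 j l : (@pact j l)^~ 1%g =1 id.
Proof. by move=> f; apply/ffunP => i; rewrite ffunE perm1. Qed.

Lemma pactM j l (f : {ffun 'I_j -> 'I_l}) : act_morph (@pact j l) f.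
Proof. by move=> a b; apply/ffunP => i; rewrite !ffunE permM. Qed.

Definition pactA j l := TotalAction (@pact1 j l) (@pactM j l).

Section Groups.
Variables q r : seq nat.

Lemma X_surj f : all (fun x => 0 < x) r -> f \in X q r -> forall t, exists i, f i = t.
Proof.
move=> /allP Hr; rewrite inE => /forallP HX t.
case: (pickP (fun i => f i == t)) => [i /eqP Hi|H0]; first by exists i.
have := HX t; rewrite big_pred0 // eq_sym => /eqP Ht.
by have := Hr _ (mem_nth 0 (ltn_ord t)); rewrite Ht.
Qed.

Lemma X_act f (s : {perm 'I_(size r)}) : f \in X q r ->
  (forall t, nth 0 r (s t) = nth 0 r t) -> pact f s \in X q r.
Proof.
rewrite !inE => /forallP HX Hs; apply/forallP => t.
rewrite (eq_bigl (fun i => f i == s^-1%g t)); last first.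
  move=> i; rewrite ffunE; apply/eqP/eqP => [<-|->]; by rewrite ?permK ?permKV.
by rewrite (eqP (HX _)) -{2}(permKV s t) Hs.
Qed.

Lemma sym_pres m (s : {perm 'I_(size r)}) :
  perm_on [set t : 'I_(size r) | nth 0 r t == m] s -> forall t, nth 0 r (s t) = nth 0 r t.
Proof.
move=> Hs t.
case: (boolP (t \in [set t : 'I_(size r) | nth 0 r t == m])) => Ht.
  have := Ht; rewrite -(perm_closed _ Hs) !inE => /eqP ->.
  by move: Ht; rewrite inE => /eqP ->.
by rewrite (out_perm Hs Ht).
Qed.

Lemma X_div p m : prime p -> all (fun x => 0 < x) r -> p <= count_mem m r -> p %| #|X q r|.
Proof.
move=> Pp Hr Hc.
set T := [set t : 'I_(size r) | nth 0 r t == m].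
set H := Group (@Sym_group_set _ T).
have HH : p %| #|H|.
  have -> : #|H| = #|T|`! by exact: (@perm.card_Sym _ T).
  by rewrite card_nth dvdn_fact // prime_gt0 // Hc.
have Hacts : [acts H, on X q r | pactA (size q) (size r)].
  apply/actsP => s Hs f /=; apply/idP/idP => Hf.
    rewrite -(actK (pactA (size q) (size r)) s f); apply: X_act => //.
    by apply: (@sym_pres m); have := groupVr Hs; rewrite inE.
  by apply: X_act => //; apply: (@sym_pres m); move: Hs; rewrite inE.
rewrite -(acts_sum_card_orbit Hacts); apply: dvdn_sum => O /imsetP [f Hf ->].
have Hstab : #|('C_H[f | pactA (size q) (size r)])%g| = 1.
  apply/eqP; rewrite (cardsD1 1%g) group1 /= add1n eqSS; apply/eqP.
  apply: eq_card0 => s; rewrite !inE; apply/negP => /and4P[Hs1 _ _]; rewrite sub1set inE => /eqP Hsf.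
  case/negP: Hs1; apply/eqP/permP => t; rewrite perm1.
  have [i <-] := X_surj Hr Hf t.
  by have := f_equal (fun g : {ffun _ -> _} => g i) Hsf; rewrite /= ffunE.
have := card_orbit_stab (pactA (size q) (size r)) H f; rewrite Hstab muln1 => ->.
exact: HH.
Qed.

End Groups.

Definition Gset (r : seq nat) : {set {perm 'I_(size r)}} :=
  [set s : {perm 'I_(size r)} | [forall t, nth 0 r (s t) == nth 0 r t]].

Lemma Gset_group r : group_set (Gset r).
Proof.
apply/group_setP; split => [|s u]; rewrite !inE.
  by apply/forallP => t; rewrite perm1.
move=> /forallP Hs /forallP Hu; apply/forallP => t.
by rewrite permM (eqP (Hu _)) (eqP (Hs _)).
Qed.

Lemma fib_perm n (s : {perm 'I_n}) (F : 'I_n -> nat) t :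
  \sum_(i | s i == t) F i = F (s^-1%g t).
Proof.
rewrite (big_pred1 (s^-1%g t)) // => i /=; apply/eqP/eqP => [<-|->]; by rewrite ?permK ?permKV.
Qed.

Lemma XG r : all (fun x => 0 < x) r -> #|X r r| = #|Gset r|.
Proof.
move=> Hr; have -> : X r r = [set val s | s in Gset r].
  apply/setP => f; apply/idP/imsetP => [Hf | [s Hs ->]].
    have inj := surj_inj (X_surj Hr Hf).
    exists (perm inj); last by apply/ffunP => i; rewrite -[val (perm inj)]/(pval (perm inj)) pvalE permE.
    rewrite inE; apply/forallP => t0; move: Hf; rewrite inE => /forallP /(_ (perm inj t0)).
    rewrite (eq_bigl (fun i => perm inj i == perm inj t0)); last by move=> i; rewrite !permE.
    by rewrite fib_perm permK eq_sym.
  rewrite inE; apply/forallP => t.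
  rewrite (eq_bigl (fun i => s i == t)); last by move=> i; rewrite -[val s]/(pval s) pvalE.
  rewrite (fib_perm s (fun i => nth 0 r i) t).
  by move: Hs; rewrite inE => /forallP /(_ (s^-1%g t)); rewrite permKV eq_sym.
by rewrite card_imset //; apply: val_inj.
Qed.

Lemma X_ndiv r p : prime p -> all (fun x => 0 < x) r -> (forall m, count_mem m r < p) ->
  ~~ (p %| #|X r r|).
Proof.
move=> Pp Hr Hc; rewrite XG //; apply/negP => Hd.
have [s Hs Hos] := @Cauchy _ p (Group (Gset_group r)) Pp Hd.
case: (pickP (fun t => s t != t)) => [t Ht|H1]; last first.
  have s1 : s = 1%g by apply/permP => t; move/negbFE: (H1 t) => /eqP ->; rewrite perm1.
  by move: Hos; rewrite s1 order1 => Hp; move: Pp; rewrite -Hp.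
set O := orbit 'P <[s]>%g t.
have HO : #|O| %| p by rewrite -Hos orderE; apply: dvdn_orbit.
have HO2 : 1 < #|O|.
  apply/card_gt1P; exists t, (s t); split; rewrite 1?eq_sym //.
    exact: orbit_refl.
  exact: (mem_orbit 'P t (cycle_id s)).
have HOp : #|O| = p.
  case/primeP: Pp => _ /(_ _ HO) /pred2P [H|] //; by rewrite H in HO2.
have Hsub : O \subset [set u : 'I_(size r) | nth 0 r u == nth 0 r t].
  apply/subsetP => u /orbitP [a Ha <-]; rewrite inE -[('P%act t a)]/(a t).
  have HsG : (<[s]> \subset Group (Gset_group r))%g by rewrite cycle_subG.
  have := subsetP HsG a Ha.
  by rewrite inE => /forallP /(_ t).
have := subset_leq_card Hsub; rewrite card_nth HOp => H.
by have := Hc (nth 0 r t); rewrite ltnNge H.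
Qed.

Lemma Mc_small q r c : all (fun x => 0 < x) q -> size c <= size q -> c != q -> Mc q r c = 0.
Proof.
move=> Hq Hs Hne; apply/eqP; rewrite -leqn0 leqNgt -has_count; apply/hasPn => Z HZ.
apply/negP => /eqP Hc; case/mem_SmatP: HZ => HsZ _ HsumZ _.
have Hpos : all (fun row => 0 < sumn row) Z by rewrite -all_map HsumZ.
have [H1 H2] := compZ_size Hpos.
have Hsz : size (compZ Z) = size Z by apply/eqP; rewrite eqn_leq H1 Hc HsZ Hs.
have [H3 _] := H2 Hsz; move/eqP: Hne; apply; by rewrite -Hc H3.
Qed.

Lemma size_le_sumn (c : seq nat) : all (fun x => 0 < x) c -> size c <= sumn c.
Proof. elim: c => //= x c IH /andP[Hx Hc]; rewrite -add1n leq_add //; exact: IH. Qed.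

Section Main.
Variable R : semiRingType.
Local Open Scope ring_scope.

Definition Einv (n : nat) (x : fsum R) :=
  all (fun a : seq nat * R => all (fun x => (0 < x)%N) a.1 && (sumn a.1 == n)) x.

Lemma Einv_fmul n (x y : fsum R) : Einv n x -> Einv n (fmul x y).
Proof.
move=> /allP Hx; apply/allP => w /flattenP [s /allpairsP [[a b] /= [Ha Hb ->]]].
move=> /mapP [w' /mapP [Z HZ ->] ->] /=.
rewrite compZ_pos /= compZ_sum; case/mem_SmatP: HZ => _ _ -> _.
by case/andP: (Hx a Ha).
Qed.

Lemma coef_notin (x : fsum R) c : c \notin map fst x -> coef x c = 0.
Proof.
elim: x => [|a x IH]; first by rewrite coef_nil.
rewrite /= inE negb_or => /andP[H1 H2]; rewrite coef_cons IH // addr0.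
by rewrite eq_sym (negbTE H1).
Qed.

Lemma coef_step (x : fsum R) r c (s : seq (seq nat)) :
  uniq s -> {subset map fst x <= s} ->
  coef (fmul x (basisB R r)) c = \sum_(q <- s) coef x q * (Mc q r c)%:R.
Proof.
move=> Us Hs; rewrite coef_fmul -(coef_regroup (fun q => (Mc q r c)%:R) Us Hs).
by apply: eq_bigr => a _; rewrite big_seq1 /= mulr1.
Qed.

End Main.

Theorem lemma2p4 (n p : nat) (r : seq nat) :
  (1 <= n)%N -> prime p -> is_composition n r ->
  (fnilpotent (basisB 'F_p r) <->
   exists m : nat, (0 < m)%N /\ (p <= count_mem m r)%N).
Proof.
move=> Hn Pp /andP[Hr /eqP Hsr].
set x0 := basisB 'F_p r.
have Hchar := pchar_Fp Pp.
have E0 : Einv n x0 by rewrite /Einv /x0 /basisB /= Hr Hsr eqxx.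
have Epow : forall k, Einv n (fpowS x0 k).
  by elim => [|k IH] //; apply: Einv_fmul.
have powS : forall k, fpowS x0 k.+1 = fmul (fpowS x0 k) x0 by [].
have rnil : r != [::] by apply/eqP => E; move: Hsr Hn; rewrite E /= => <-.
have Hposs : forall k q, q \in undup (r :: map fst (fpowS x0 k)) -> all (fun x => 0 < x)%N q.
  move=> k q; rewrite mem_undup inE => /orP [/eqP -> //| /mapP [a Ha ->]].
  by case/andP: (allP (Epow k) a Ha).
have Hsub : forall k, {subset map fst (fpowS x0 k) <= undup (r :: map fst (fpowS x0 k))}.
  by move=> k q Hq; rewrite mem_undup inE Hq orbT.
split.
- move=> [k0 Hk].
  case: (boolP (has (fun m => p <= count_mem m r)%N r)) => [/hasP [m Hm Hc]|Hno].
    by exists m; split => //; exact: (allP Hr m Hm).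
  exfalso.
  have Hlt : forall m, (count_mem m r < p)%N.
    move=> m; case: (boolP (m \in r)) => Hm; first by rewrite ltnNge (hasPn Hno m Hm).
    by rewrite (count_memPn Hm) prime_gt0.
  set d := Mc r r r.
  have Hd : ((d%:R)%R : 'F_p) != 0%R by rewrite /d Mc_card // -(dvdn_pcharf Hchar); apply: X_ndiv.
  have Inv : forall k, (forall c, (size c < size r)%N -> coef (fpowS x0 k) c = 0%R) /\
                       coef (fpowS x0 k) r = ((d%:R) ^+ k)%R.
    elim => [|k [IH1 IH2]].
      split; last by rewrite /= /x0 /basisB coef_cons eqxx coef_nil addr0 expr0.
      move=> c Hc; rewrite /= /x0 /basisB coef_cons coef_nil addr0; case: eqP => // E.
      by move: Hc; rewrite -E /= ltnn.
    have Us := undup_uniq (r :: map fst (fpowS x0 k)).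
    split.
      move=> c Hc; rewrite powS (coef_step _ _ Us (Hsub k)) big1_seq // => q /andP[_ Hq].
      case: (ltnP (size q) (size r)) => Hqr; first by rewrite IH1 // mul0r.
      rewrite Mc_small ?mulr0 ?(Hposs k) //; first exact: ltnW (leq_trans Hc Hqr).
      by apply/eqP => E; rewrite E ltnNge Hqr in Hc.
    have Hrs : r \in undup (r :: map fst (fpowS x0 k)) by rewrite mem_undup mem_head.
    rewrite powS (coef_step _ _ Us (Hsub k)) (bigD1_seq _ Hrs Us) /=.
    rewrite big1_seq ?addr0; first by rewrite IH2 exprSr.
    move=> q /andP[Hqr' Hq].
    case: (ltnP (size q) (size r)) => Hqr; first by rewrite IH1 // mul0r.
    by rewrite Mc_small ?mulr0 ?(Hposs k) // eq_sym.
  have [_ H2] := Inv k0; have := Hk r; rewrite H2 => /eqP.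
  by rewrite expf_eq0 (negbTE Hd) andbF.
- move=> [m [Hm Hcm]]; exists n.
  have Inv : forall k c, (size c <= k)%N -> coef (fpowS x0 k) c = 0%R.
    elim => [|k IH] c Hc.
      rewrite /= /x0 /basisB coef_cons coef_nil addr0; case: eqP => // E.
      by move: Hc; rewrite -E leqn0 size_eq0 (negbTE rnil).
    have Us := undup_uniq (r :: map fst (fpowS x0 k)).
    rewrite powS (coef_step _ _ Us (Hsub k)) big1_seq // => q /andP[_ Hq].
    case: (leqP (size q) k) => Hqk; first by rewrite IH // mul0r.
    case: (eqVneq c q) => [Ecq|Hne].
      rewrite -Ecq Mc_card; last by rewrite Ecq (Hposs k).
      have := X_div c Pp Hr Hcm; rewrite (dvdn_pcharf Hchar) => /eqP ->.
      by rewrite mulr0.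
    by rewrite Mc_small ?mulr0 ?(Hposs k) //; exact: leq_trans Hc Hqk.
  move=> c; case: (leqP (size c) n) => H; first exact: Inv.
  apply: coef_notin; apply/negP => /mapP [a Ha Ec].
  have /andP[Hp /eqP Hs] := allP (Epow n) a Ha.
  by move: H; rewrite Ec -Hs ltnNge size_le_sumn.
Qed.
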